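(* Let $(\Omega,\mathcal F,\mathbb P)$ be a probability space with an invertible, measurable, $\mathbb P$-preserving ergodic $\sigma$; let $M$ be a compact Riemannian manifold with normalized volume $m$, $I\subset(-1,1)$ an open interval containing $0$, and for $\omega\in\Omega$, $\epsilon\in I$ let $\mathcal L_{\omega,\epsilon}$ be the transfer operator (with respect to $m$) of a map $T_{\omega,\epsilon}\colon M\to M$, with $\mathcal L^n_{\omega,\epsilon}:=\mathcal L_{\sigma^{n-1}\omega,\epsilon}\circ\cdots\circ\mathcal L_{\omega,\epsilon}$. Assume there is a random variable $E(\omega)$ with $\|\mathcal L_{\omega,\epsilon}\mathbf 1\|_\infty\le E(\omega)$ for all $\epsilon\in I$ and $\mathbb P$-a.e. $\omega$. Assume also there are functions $h_{\omega,\epsilon}$, a number $\beta>1$ and $C_1\in L^{p_1}(\Omega,\mathcal F,\mathbb P)$ with $p_1\ge1$ such that for $\mathbb P$-a.e. $\omega$, all $n\ge1$, $\epsilon\in I$ and $h\in C^1(M)$, $$\|\mathcal L^n_{\omega,\epsilon}h-m(h)h_{\sigma^n\omega,\epsilon}\|_\infty\le C_1(\omega)n^{-\beta}\|h\|_{C^1}.$$ Then there exists $B_0\in L^{p_1}(\Omega,\mathcal F,\mathbb P)$ such that for $\mathbb P$-a.e. $\omega$, all $n\ge1$ and $\epsilon\in I$, $\|\mathcal L^n_{\sigma^{-n}\omega,\epsilon}\mathbf 1\|_\infty\le B_0(\omega)+E(\sigma^{-1}\omega)$.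
   Context: $m(h)=\int_M h\,dm$; $\mathbf 1$ is the constant function $1$. *)

(* Defs.v *)
From HB Require Import structures.
From mathcomp Require Import all_boot all_order all_algebra.
From mathcomp Require Import all_classical all_reals all_analysis.
Set Implicit Arguments. Unset Strict Implicit. Unset Printing Implicit Defensive.
Import Order.TTheory GRing.Theory Num.Theory.
Local Open Scope classical_set_scope.
Local Open Scope ring_scope.

Section Defs.
Context {R : realType}.

Definition invertible_measurable {d} {O : measurableType d}
  (sigma sigmainv : O -> O) : Prop :=
  cancel sigma sigmainv /\ cancel sigmainv sigma /\
  measurable_fun setT sigma /\ measurable_fun setT sigmainv.

Definition measure_preserving {d} {O : measurableType d}
  (P : probability O R) (sigma : O -> O) : Prop :=
  forall A, measurable A -> P (sigma @^-1` A) = P A.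

Definition ergodic {d} {O : measurableType d}
  (P : probability O R) (sigma : O -> O) : Prop :=
  forall A, measurable A -> sigma @^-1` A = A -> P A = 0%E \/ P A = 1%E.

Definition inLp {d} {O : measurableType d} (P : probability O R) (p : R)
  (f : O -> R) : Prop :=
  measurable_fun setT f /\ ('N[P]_(p%:E)[EFin \o f] < +oo)%E.

Definition supnorm {d} {M : measurableType d} (m : probability M R)
  (f : M -> R) : \bar R := 'N[m]_(+oo%E)[EFin \o f].

(* L is the transfer operator of T with respect to m: T is measurable and
   nonsingular, and L is the dual of the Koopman operator g |-> g \o T:
   for f in L^1(m) and g in L^oo(m), int (L f) g dm = int f (g \o T) dm. *)
Definition transfer_operator {d} {M : measurableType d} (m : probability M R)
  (T : M -> M) (L : (M -> R) -> (M -> R)) : Prop :=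
  measurable_fun setT T /\
  (forall A, measurable A -> m A = 0%E -> m (T @^-1` A) = 0%E) /\
  forall f, m.-integrable setT (EFin \o f) ->
    m.-integrable setT (EFin \o L f) /\
    forall g : M -> R, measurable_fun setT g -> (exists K : R, forall x, `|g x| <= K) ->
      (\int[m]_x (L f x * g x)%:E = \int[m]_x (f x * g (T x))%:E)%E.

Fixpoint Lcomp {O M : Type} (sigma : O -> O)
  (L : O -> (M -> R) -> (M -> R)) (n : nat) (w : O) (h : M -> R) : M -> R :=
  match n with
  | 0%N => h
  | k.+1 => L (iter k sigma w) (Lcomp sigma L k w h)
  end.

(* Abstraction of the C^1 space of the compact Riemannian manifold M
   (differential geometry is not available): a class of functions with a
   norm, containing the constants with ||c||_{C^1} = |c|, consisting of
   measurable functions with sup |h| <= ||h||_{C^1}. *)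
Definition C1_structure {d} {M : measurableType d}
  (C1 : set (M -> R)) (C1norm : (M -> R) -> R) : Prop :=
  (forall c : R, C1 (fun _ => c) /\ C1norm (fun _ => c) = `|c|) /\
  (forall h, C1 h -> measurable_fun setT h /\ forall x, `|h x| <= C1norm h).

End Defs.

(* Main.v *)
Require Import Defs.
Set Warnings "-all".
From HB Require Import structures.
From mathcomp Require Import all_boot all_order all_algebra.
From mathcomp Require Import all_classical all_reals all_analysis.
From mathcomp Require Import measurable_realfun.
From mathcomp Require Import ring lra.
Import Order.TTheory GRing.Theory Num.Theory.
Local Open Scope classical_set_scope.
Local Open Scope ring_scope.
Section supn.
Context {R : realType} {d} {M : measurableType d} (m : probability M R).

Lemma supnorm_ae (f : M -> R) (c : R) :
  (supnorm m f <= c%:E)%E -> \forall x \ae m, `|f x| <= c.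
Proof.
rewrite /supnorm unlock /Lnorm; case: ifPn => [_|]; last first.
  move=> /negP[]; apply: (@lt_le_trans _ _ 1%E); first exact: lte01.
  by rewrite le_eqVlt; apply/orP; left; apply/eqP; exact/esym/probability_setT.
move=> /ess_sup_inf.ess_supP.
by apply: filterS => x /=; rewrite lee_fin.
Qed.

Lemma ae_supnorm (f : M -> R) (c : R) :
  (\forall x \ae m, `|f x| <= c) -> (supnorm m f <= c%:E)%E.
Proof.
rewrite /supnorm unlock /Lnorm => H; case: ifPn => [_|]; last first.
  move=> /negP[]; apply: (@lt_le_trans _ _ 1%E); first exact: lte01.
  by rewrite le_eqVlt; apply/orP; left; apply/eqP; exact/esym/probability_setT.
by apply/ess_sup_inf.ess_supP; apply: filterS H => x /=; rewrite lee_fin.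
Qed.
End supn.
Arguments supnorm_ae {R d M m f c}.
Arguments ae_supnorm {R d M m f c}.

Section pres.
Context {R : realType} {d} {O : measurableType d} (P : probability O R).

Definition preserves (phi : O -> O) :=
  measurable_fun setT phi /\ forall A, measurable A -> P (phi @^-1` A) = P A.

Lemma preim_meas (phi : O -> O) A : measurable_fun setT phi -> measurable A ->
  measurable (phi @^-1` A).
Proof. by move=> mphi mA; rewrite -(setTI (_ @^-1` _)); exact: mphi. Qed.

Lemma preserves_iter phi k : preserves phi -> preserves (iter k phi).
Proof.
move=> [mphi pphi]; elim: k => [|k [mk pk]].
  split; first exact: measurable_id.
  by move=> A mA /=; rewrite preimage_id.
split.
  by rewrite /=; apply: (measurableT_comp mphi mk).
move=> A mA /=.
have -> : (fun x => phi (iter k phi x)) @^-1` A = iter k phi @^-1` (phi @^-1` A) by [].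
by rewrite pk ?pphi //; exact: preim_meas.
Qed.

Lemma ae_transport phi (Q : O -> Prop) : preserves phi ->
  (\forall x \ae P, Q x) -> \forall x \ae P, Q (phi x).
Proof.
move=> [mphi pphi] [N [mN PN QN]].
exists (phi @^-1` N); split.
- exact: preim_meas.
- by rewrite pphi.
- by move=> x /= nQ; apply: QN.
Qed.

Lemma integral_preserves phi (f : O -> \bar R) : preserves phi ->
  measurable_fun setT f -> (forall x, (0 <= f x)%E) ->
  (\int[P]_x f (phi x) = \int[P]_x f x)%E.
Proof.
move=> [mphi pphi] mf f0.
have := ge0_integral_pushforward mphi P measurableT mf (fun y _ => f0 y).
rewrite preimage_setT => <-.
apply: eq_measure_integral => A mA _.
by rewrite /pushforward; exact: pphi.
Qed.
End pres.
Arguments preserves_iter {R d O P phi} k.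
Arguments ae_transport {R d O P phi Q}.
Arguments integral_preserves {R d O P phi f}.
Section ps.
Context {R : realType}.
Variable s : R.
Hypothesis s1 : 1 < s.
Let f (k : nat) : R := k%:R `^ (- s).
Let q : R := 2 `^ (1 - s).

Lemma f_ge0 k : 0 <= f k. Proof. exact: powR_ge0. Qed.

Lemma q_lt1 : q < 1.
Proof.
rewrite /q /powR pnatr_eq0 /= -[X in _ < X]expR0 ltr_expR.
by rewrite pmulr_llt0 ?ln_gt0 ?ltr1n // subr_lt0.
Qed.

Lemma q_ge0 : 0 <= q. Proof. exact: powR_ge0. Qed.

Lemma f_block J : \sum_(2 ^ J <= k < 2 ^ J.+1) f k <= q ^+ J.
Proof.
have hJ : (0 < 2 ^ J)%N by rewrite expn_gt0.
apply: (@le_trans _ _ (\sum_(2 ^ J <= k < 2 ^ J.+1) (2 ^ J)%:R `^ (- s))).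
  apply: ler_sum_nat => k /andP[hk _].
  rewrite /f !powRN lef_pV2 ?posrE ?powR_gt0 ?ltr0n //; last by apply: (leq_trans hJ).
  by apply: ge0_ler_powR; rewrite ?nnegrE ?ler0n ?ler_nat // ltW // (lt_trans ltr01).
rewrite sumr_const_nat expnS mul2n -addnn addnK.
rewrite -(mulr_natr ((2 ^ J)%:R `^ (- s))) -[X in _ * X](powRr1 (ler0n _ (2 ^ J))) -powRD; last first.
  by rewrite pnatr_eq0 -lt0n hJ implybT.
by rewrite natrX -powR_mulrn ?ler0n // -powR_mulrn ?q_ge0 // /q powRAC [- s + 1]addrC.
Qed.

Lemma f_pow J : \sum_(0 <= k < 2 ^ J) f k <= \sum_(j < J) q ^+ j.
Proof.
elim: J => [|J IH].
  by rewrite expn0 big_nat1 big_ord0 /f powR0 // oppr_eq0 gt_eqF // (lt_trans ltr01).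
rewrite big_ord_recr /= (big_cat_nat _ (n := 2 ^ J)) //=; last first.
  by rewrite expnS mul2n -addnn leq_addl.
by apply: lerD => //; exact: f_block.
Qed.

Lemma geom_bound J : \sum_(j < J) q ^+ j <= (1 - q)^-1.
Proof.
have hq : 0 < 1 - q by rewrite subr_gt0 q_lt1.
rewrite -[(1 - q)^-1]mul1r ler_pdivlMr // mulrC.
have -> : (1 - q) * \sum_(j < J) q ^+ j = 1 - q ^+ J.
  by rewrite -opprB mulNr -subrX1 opprB.
by rewrite lerBlDr lerDl exprn_ge0 // q_ge0.
Qed.

Lemma pseries_fin : (\sum_(k <oo) (f k)%:E < +oo)%E.
Proof.
apply: (@le_lt_trans _ _ ((1 - q)^-1)%:E); last exact: ltry.
apply: lime_le; first by apply: is_cvg_nneseries => n _ _; rewrite lee_fin f_ge0.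
apply: nearW => n /=.
rewrite sumEFin lee_fin.
apply: (le_trans _ (geom_bound n)).
apply: (le_trans _ (f_pow n)).
rewrite [X in _ <= X](big_cat_nat _ (n := n)) //=; last by apply: ltnW; apply: ltn_expl.
by rewrite lerDl sumr_ge0 // => i _; exact: f_ge0.
Qed.
End ps.

Lemma iter_back {T : Type} (sigma tau : T -> T) : cancel tau sigma ->
  forall n w, iter n sigma (iter n tau w) = w.
Proof. by move=> K; elim=> [//|n IH] w; rewrite iterSr [iter n.+1 tau w]iterS K IH. Qed.

Lemma fine_le_self {R : realType} (x : \bar R) : (0 <= x)%E -> ((fine x)%:E <= x)%E.
Proof. by case: x => [r _|_|//] /=; [exact: lexx | exact: leey]. Qed.

Theorem lemma22 (R : realType)
  (dO : measure_display) (Omega : measurableType dO) (P : probability Omega R)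
  (sigma sigmainv : Omega -> Omega)
  (Hsig : invertible_measurable sigma sigmainv)
  (Hpres : measure_preserving P sigma) (Herg : ergodic P sigma)
  (dM : measure_display) (M : measurableType dM) (m : probability M R)
  (C1 : set (M -> R)) (C1norm : (M -> R) -> R)
  (HC1 : C1_structure C1 C1norm)
  (a b : R) (Ha : -1 <= a) (Ha0 : a < 0) (Hb0 : 0 < b) (Hb : b <= 1)
  (T : Omega -> R -> M -> M) (L : Omega -> R -> (M -> R) -> (M -> R))
  (HL : forall w eps, eps \in `]a, b[ -> transfer_operator m (T w eps) (L w eps))
  (E : Omega -> R) (HEmeas : measurable_fun setT E)
  (HE : {ae P, forall w, forall eps, eps \in `]a, b[ ->
          (supnorm m (L w eps (fun _ => 1%R)) <= (E w)%:E)%E})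
  (hh : Omega -> R -> M -> R) (beta : R) (Hbeta : 1 < beta)
  (p1 : R) (Hp1 : 1 <= p1) (Cst1 : Omega -> R) (HC1p : inLp P p1 Cst1)
  (Hdec : {ae P, forall w, forall (n : nat) eps h, (1 <= n)%N ->
          eps \in `]a, b[ -> C1 h ->
          (supnorm m (fun x => (Lcomp sigma (fun w' => L w' eps) n w h x
                               - Rintegral m setT h * hh (iter n sigma w) eps x)%R)
           <= (Cst1 w * (n%:R `^ (- beta)) * C1norm h)%R%:E)%E}) :
  exists B0 : Omega -> R, inLp P p1 B0 /\
    {ae P, forall w, forall (n : nat) eps, (1 <= n)%N -> eps \in `]a, b[ ->
      (supnorm m (Lcomp sigma (fun w' => L w' eps) n (iter n sigmainv w)
                        (fun _ => 1%R))
       <= (B0 w + E (sigmainv w))%R%:E)%E}.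
Proof.
have [sK [Ks [msig mtau]]] := Hsig.
have p10 : 0 < p1 by apply: lt_le_trans Hp1.
have ptau : preserves P sigmainv.
  split => // A mA.
  rewrite -(Hpres (sigmainv @^-1` A)); last exact: preim_meas.
  by congr (P _); apply/seteqP; split => x /=; rewrite sK.
pose aa k w := `|Cst1 (iter k sigmainv w)| * k%:R `^ (- beta).
pose t k w := aa k w `^ p1.
pose S w := (\sum_(k <oo) (t k w)%:E)%E.
have t0 k w : 0 <= t k w by exact: powR_ge0.
have a0 k w : 0 <= aa k w by rewrite mulr_ge0 ?powR_ge0.
have S0 w : (0 <= S w)%E by apply: nneseries_ge0 => i _ _; rewrite lee_fin.
have mC : measurable_fun setT Cst1 := HC1p.1.
have mt k : measurable_fun setT (t k).
  have ma : measurable_fun setT (aa k).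
    rewrite /aa; apply: measurable_funM; last exact: measurable_cst.
    have h1 := (preserves_iter k ptau).1.
    have h2 := measurableT_comp mC h1.
    have h3 := measurableT_comp (@normr_measurable R setT) h2.
    exact: h3.
  have h4 := measurableT_comp (@measurable_powR R p1) ma.
  exact: h4.
have mS : measurable_fun setT S.
  apply: (@ge0_emeasurable_sum _ _ _ _ (fun k x => (t k x)%:E) xpredT) => [k x _ _|k _].
    by rewrite lee_fin.
  by apply/measurable_EFinP; exact: mt.
pose g x := `|Cst1 x| `^ p1.
have mg : measurable_fun setT g.
  have h1 := measurableT_comp (@normr_measurable R setT) mC.
  have h2 := measurableT_comp (@measurable_powR R p1) h1.
  exact: h2.
pose K := (\int[P]_x (g x)%:E)%E.
have K0 : (0 <= K)%E by apply: integral_ge0 => x _; rewrite lee_fin powR_ge0.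
have Kfin : K \is a fin_num.
  have eK : K = ('N[P]_(p1%:E)[EFin \o Cst1] `^ p1)%E.
    by rewrite poweR_Lnorm ?gt_eqF //.
  rewrite eK ge0_fin_numE ?poweR_ge0 //; exact: poweR_lty HC1p.2.
have intt k : (\int[P]_x (t k x)%:E = (k%:R `^ (- (beta * p1)))%:E * K)%E.
  have -> : (fun x => (t k x)%:E) =
      (fun x => (k%:R `^ (- (beta * p1)))%:E * (g (iter k sigmainv x))%:E)%E.
    apply/funext => x; rewrite /t /aa powRM ?powR_ge0 // -EFinM mulrC.
    by rewrite -powRrM mulNr.
  have mgk : measurable_fun setT (fun x => (g (iter k sigmainv x))%:E).
    apply/measurable_EFinP.
    have h1 := measurableT_comp mg (preserves_iter k ptau).1.
    exact: h1.
  rewrite ge0_integralZl_EFin ?powR_ge0 //; last by move=> x _; rewrite lee_fin powR_ge0.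
  congr (_ * _)%E.
  apply: (integral_preserves (f := fun x => (g x)%:E)).
  - exact: preserves_iter.
  - by apply/measurable_EFinP.
  - by move=> x; rewrite lee_fin powR_ge0.
have s1 : 1 < beta * p1.
  by apply: (lt_le_trans Hbeta); rewrite ler_peMr // ltW // (lt_trans ltr01).
have intS : (\int[P]_x S x < +oo)%E.
  rewrite /S (@integral_nneseries _ _ _ P setT measurableT (fun k x => (t k x)%:E)); last 2 first.
  - by move=> k; apply/measurable_EFinP; exact: mt.
  - by move=> k x _; rewrite lee_fin.
  rewrite (eq_eseriesr (g := fun k => ((fine K)%:E * (k%:R `^ (- (beta * p1)))%:E)%E)); last first.
    by move=> k _; rewrite intt fineK // muleC.
  rewrite nneseriesZl; last by move=> k _; rewrite lee_fin powR_ge0.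
  apply: lte_mul_pinfty; [by rewrite fineK | by [] | exact: pseries_fin].
have intS' : P.-integrable setT S.
  apply/integrableP; split => //.
  by under eq_integral do rewrite gee0_abs //.
pose F w := fine (S w).
have F0 w : 0 <= F w by exact: fine_ge0 (S0 w).
exists (fun w => 2 * F w `^ p1^-1); split.
  split.
    apply: measurable_funM; first exact: measurable_cst.
    have h1 := measurableT_comp (@fine_measurable R setT measurableT) mS.
    have h2 := measurableT_comp (@measurable_powR R p1^-1) h1.
    exact: h2.
  have eN : ('N[P]_(p1%:E)[EFin \o (fun w => (2 * F w `^ p1^-1)%R)] `^ p1 =
            \int[P]_x ((2 `^ p1)%:E * (F x)%:E))%E.
    rewrite poweR_Lnorm ?gt_eqF //; apply: eq_integral => x _ /=.
    rewrite -EFinM; congr EFin.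
    rewrite ger0_norm ?mulr_ge0 ?powR_ge0 // powRM ?powR_ge0 //.
    by rewrite -powRrM mulVf ?gt_eqF // powRr1.
  have lt : ('N[P]_(p1%:E)[EFin \o (fun w => (2 * F w `^ p1^-1)%R)] `^ p1 < +oo)%E.
    rewrite eN ge0_integralZl_EFin ?powR_ge0 //; last 2 first.
    - by move=> x _; rewrite lee_fin.
    - apply/measurable_EFinP.
      have h1 := measurableT_comp (@fine_measurable R setT measurableT) mS.
      exact: h1.
    apply: lte_mul_pinfty; [by rewrite lee_fin powR_ge0 | by [] |].
    apply: le_lt_trans intS.
    apply: ge0_le_integral => //.
    - by move=> x _; rewrite lee_fin.
    - apply/measurable_EFinP.
      have h1 := measurableT_comp (@fine_measurable R setT measurableT) mS.
      exact: h1.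
    - by move=> x _; exact: fine_le_self.
  rewrite ltNge leye_eq; apply/negP => /eqP Ninf.
  by move: lt; rewrite Ninf poweRyr ?gt_eqF // ltxx.
have G1 := ae_foralln (fun k => ae_transport (preserves_iter k ptau) Hdec).
have G2 := ae_transport ptau HE.
have G3 := integrable_ae measurableT intS'.
apply: filterS3 G1 G2 G3 => w H1 H2 H3 n eps hn heps.
have Sf : S w \is a fin_num := H3 I.
have aS k : aa k w <= F w `^ p1^-1.
  have tk : t k w <= F w.
    rewrite -lee_fin fineK //.
    apply: le_trans (nneseries_lim_ge k.+1 _); last by move=> i _ _; rewrite lee_fin.
    by rewrite big_nat_recr //= leeDr // sume_ge0 // => i _; rewrite lee_fin.
  have -> : aa k w = t k w `^ p1^-1 by rewrite /t -powRrM mulfV ?gt_eqF // powRr1.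
  have hp : 0 <= p1^-1 by rewrite invr_ge0 ltW.
  by apply: (ge0_ler_powR hp) => //; rewrite nnegrE.
have C1c : C1 (fun _ => 1) := (HC1.1 1).1.
have C1n : C1norm (fun _ => 1) = 1 by rewrite (HC1.1 1).2 normr1.
have RI : Rintegral m setT (fun _ : M => 1) = 1.
  rewrite Rintegral_cst //; set u := fine _.
  have -> : u = 1 by exact: (congr1 fine (probability_setT m)).
  by rewrite mulr1.
have H1n := H1 n n eps (fun _ => 1) hn heps C1c.
have H11 := H1 1%N 1%N eps (fun _ => 1) (leqnn 1) heps C1c.
have H2e := H2 eps heps.
rewrite C1n RI iter_back // in H1n H11.
apply: ae_supnorm.
apply: filterS3 (supnorm_ae H1n) (supnorm_ae H11) (supnorm_ae H2e) => x h1 h2 h3.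
rewrite mul1r mulr1 in h1.
rewrite /= powR1 /= Ks mul1r !mulr1 in h2.
have an : Cst1 (iter n sigmainv w) * n%:R `^ (- beta) <= aa n w.
  by apply: ler_wpM2r; [exact: powR_ge0 | exact: ler_norm].
have a1 : Cst1 (sigmainv w) <= aa 1%N w.
  by rewrite /aa powR1 /= mulr1; exact: ler_norm.
set X := Lcomp _ _ _ _ _ x.
set Y := hh w eps x.
set Z := L (sigmainv w) eps (fun=> 1) x.
have tri : `|X| <= `|X - Y| + `|Z - Y| + `|Z|.
  have e : X = (X - Y) - (Z - Y) + Z by ring.
  rewrite [X in `|X| <= _]e.
  apply: (le_trans (ler_normD _ _)); rewrite lerD2r; exact: ler_normB.
have := aS n; have := aS 1%N.
lra.
Qed.
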